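(* Let $-3<\gamma\le1$ and $0<\varepsilon\le1$. Let $\phi^\varepsilon(t,x)$ satisfy $\sup_{0\le t\le T}\{(1+t)^{5/4}\|\nabla_x\phi^\varepsilon(t)\|_{W^{1,\infty}_x}\}\le\delta$ with $\delta>0$ sufficiently small, and let $(X(\tau;t,x,v),V(\tau;t,x,v))$ be the characteristics $$\frac{\mathrm dX}{\mathrm d\tau}=\frac1\varepsilon V,\quad X(t;t,x,v)=x;\qquad\frac{\mathrm dV}{\mathrm d\tau}=-\nabla_x\phi^\varepsilon(\tau,X(\tau;t,x,v)),\quad V(t;t,x,v)=v.$$ Let $T_0>0$ be a sufficiently small fixed number. Then for $0\le\tau\le t\le\varepsilon^{1/2}T_0$ (within $[0,T]$), $$\frac1{2\varepsilon^3}|t-\tau|^3\le\Big|\det\Big(\frac{\partial X(\tau;t,x,v)}{\partial v}\Big)\Big|\le\frac2{\varepsilon^3}|t-\tau|^3 .$$ *)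

(* Defs.v *)
From HB Require Import structures.
From mathcomp Require Import all_boot all_order all_algebra.
From mathcomp Require Import all_classical all_reals all_analysis.
Set Implicit Arguments. Unset Strict Implicit. Unset Printing Implicit Defensive.
Import Order.TTheory GRing.Theory Num.Theory numFieldNormedType.Exports.
Local Open Scope ring_scope.

Definition grad_x {R : realType} (phi : R -> 'rV[R]_3 -> R) (t : R)
  (x : 'rV[R]_3) : 'rV[R]_3 :=
  (jacobian (fun y : 'rV[R]_3 => \row_(_ < 1) phi t y) x)^T.

Definition hess_x {R : realType} (phi : R -> 'rV[R]_3 -> R) (t : R)
  (x : 'rV[R]_3) : 'M[R]_3 :=
  jacobian (grad_x phi t) x.

(* ||nabla_x phi(t)||_{W^{1,oo}_x} <= c, i.e.
   sup_x |nabla phi(t,x)| + sup_y |nabla^2 phi(t,y)| <= c,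
   written equivalently as a bound for all pairs (x, y); |.| is the
   max-entry norm of MathComp-Analysis on vectors / matrices. *)
Definition W1inf_grad_le {R : realType} (phi : R -> 'rV[R]_3 -> R) (t c : R) :=
  forall x y : 'rV[R]_3, `|grad_x phi t x| + `|hess_x phi t y| <= c.

(* Main.v *)
Require Import Defs.
From HB Require Import structures.
From mathcomp Require Import all_boot all_order all_algebra.
From mathcomp Require Import all_classical all_reals all_analysis.
From mathcomp Require Import ring lra.
Import Order.TTheory GRing.Theory Num.Theory numFieldNormedType.Exports.
Local Open Scope ring_scope.
Local Open Scope classical_set_scope.


Lemma mulbound {R : realDomainType} {x y p q : R} : `|x| <= p -> `|y| <= q -> `|x * y| <= p * q.
Proof. move=> hx hy; rewrite normrM; apply: ler_pM => //. Qed.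

Lemma poly3 (R : realFieldType) (x00 x01 x02 x10 x11 x12 x20 x21 x22 : R) :
  `|x00| <= 1/100 -> `|x01| <= 1/100 -> `|x02| <= 1/100 ->
  `|x10| <= 1/100 -> `|x11| <= 1/100 -> `|x12| <= 1/100 ->
  `|x20| <= 1/100 -> `|x21| <= 1/100 -> `|x22| <= 1/100 ->
  -2 <= (x00-1)*((x11-1)*(x22-1) - x12*x21) - x01*(x10*(x22-1) - x12*x20)
           + x02*(x10*x21 - (x11-1)*x20) <= -1/2.
Proof.
move=> h00 h01 h02 h10 h11 h12 h20 h21 h22.
have hm1 : forall z : R, `|z| <= 1/100 -> `|z - 1| <= 101/100.
  move=> z hz; apply: le_trans (ler_normB _ _) _; rewrite normr1; lra.
have a1 := mulbound h12 h21.
have a2 := mulbound h10 (hm1 _ h22).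
have a3 := mulbound h12 h20.
have a4 := mulbound h10 h21.
have a5 := mulbound (hm1 _ h11) h20.
have b1 : `|x10 * (x22 - 1) - x12 * x20| <= 1/100 * (101/100) + 1/100 * (1/100).
  by apply: le_trans (ler_normB _ _) _; lra.
have b2 : `|x10 * x21 - (x11 - 1) * x20| <= 1/100 * (1/100) + 101/100 * (1/100).
  by apply: le_trans (ler_normB _ _) _; lra.
have c1 := mulbound h01 b1.
have c2 := mulbound h02 b2.
have g11 : x11 - 1 <= -99/100 /\ -101/100 <= x11 - 1.
  by move: h11; rewrite ler_norml; lra.
have g22 : x22 - 1 <= -99/100 /\ -101/100 <= x22 - 1.
  by move: h22; rewrite ler_norml; lra.
have g00 : x00 - 1 <= -99/100 /\ -101/100 <= x00 - 1.
  by move: h00; rewrite ler_norml; lra.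
have p1 : 99/100 * (99/100) <= (x11-1)*(x22-1) <= 101/100 * (101/100).
  by case: g11 => ? ?; case: g22 => ? ?; apply/andP; split; nra.
move: a1; rewrite ler_norml => /andP[a1 a1'].
set u := (x11 - 1) * (x22 - 1) - x12 * x21.
have hu : 99/100 * (99/100) - 1/100*(1/100) <= u <= 101/100 * (101/100) + 1/100*(1/100).
  by rewrite /u; move/andP: p1 => [? ?]; apply/andP; split; lra.
have p2 : -2 + 1/10 <= (x00 - 1) * u <= -1/2 - 1/10.
  by case: g00 => ? ?; move/andP: hu => [? ?]; apply/andP; split; nra.
move: c1 c2; rewrite !ler_norml => /andP[? ?] /andP[? ?].
apply/andP; split; move/andP: p2 => [? ?]; lra.
Qed.

Lemma det3E (R : comNzRingType) (A : 'M[R]_3) : \det A =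
  A 0 0 * (A 1 1 * A 2 2 - A 1 2 * A 2 1)
  - A 0 1 * (A 1 0 * A 2 2 - A 1 2 * A 2 0)
  + A 0 2 * (A 1 0 * A 2 1 - A 1 1 * A 2 0).
Proof.
pose B (i j : nat) := A (inord i) (inord j).
have -> : A = \matrix_(i, j) B i j.
  by apply/matrixP => i j; rewrite mxE /B !inord_val.
rewrite (expand_det_row _ ord0) !big_ord_recr big_ord0 /= /cofactor.
rewrite !(expand_det_row _ ord0) !big_ord_recr !big_ord0 /= /cofactor.
rewrite !det_mx11 !mxE /=.
rewrite !expr0 !expr1 /=. ring.
Qed.

Lemma detbound (R : realFieldType) (a : R) (J : 'M[R]_3) : 0 < a ->
  (forall i j, `|J i j + a *+ (i == j)| <= a / 100) ->
  a ^+ 3 / 2 <= `|\det J| <= 2 * a ^+ 3.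
Proof.
move=> a0 hb.
pose x i j := (J i j + a *+ (i == j)) / a.
have hx : forall i j, `|x i j| <= 1/100.
  move=> i j; rewrite /x normrM normfV (gtr0_norm a0) ler_pdivrMr //.
  by rewrite mul1r mulrC.
have hJ : forall i j, J i j = a * (x i j - (i == j)%:R).
  by move=> i j; rewrite /x mulrBr mulrCA mulfV ?(lt0r_neq0 a0) // mulr1 mulr_natr addrK.
have := @poly3 R _ _ _ _ _ _ _ _ _ (hx 0 0) (hx 0 1) (hx 0 2) (hx 1 0) (hx 1 1) (hx 1 2) (hx 2 0) (hx 2 1) (hx 2 2).
set D := (_ - _ + _) => hD.
have -> : \det J = a ^+ 3 * D.
  rewrite det3E !hJ /D /=. ring.
rewrite normrM gtr0_norm ?exprn_gt0 //.
have -> : `|D| = - D by rewrite ler0_norm //; move/andP: hD => [_ ?]; lra.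
have a3 : 0 < a ^+ 3 by rewrite exprn_gt0.
move/andP: hD => [h1 h2]; apply/andP; split; nra.
Qed.


Section SA.
Variable R : realType.

Lemma mx_entry_le m n (M : 'M[R]_(m, n)) i j : `|M i j| <= `|M|.
Proof.
rewrite [leRHS]/Num.Def.normr/= mx_normrE.
by apply: le_trans; last exact: (le_bigmax _ _ (i, j)).
Qed.

Lemma mx_norm_le m n (M : 'M[R]_(m, n)) B : 0 <= B ->
  (forall i j, `|M i j| <= B) -> `|M| <= B.
Proof.
move=> B0 hM; rewrite [leLHS]/Num.Def.normr/= mx_normrE.
by apply: bigmax_le => // -[i j] _; exact: hM.
Qed.

Lemma mvi m n (f df : R -> 'M[R]_(m, n)) (C : 'M[R]_(m, n)) (a b B : R) :
  a <= b -> {within `[a, b], continuous f} ->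
  (forall x, x \in `]a, b[%R -> is_derive x 1 f (df x)) ->
  (forall x, x \in `]a, b[%R -> `|df x - C| <= B) ->
  `|f b - f a - (b - a) *: C| <= B * (b - a).
Proof.
move=> ab cf hd hB.
case: (ltgtP a b) ab => // [altb|->] _; last by rewrite !subrr scale0r subr0 normr0 mulr0.
have B0 : 0 <= B.
  have mid := mid_in_itvoo altb.
  by apply: le_trans (hB _ mid).
apply: mx_norm_le; first by rewrite mulr_ge0 // subr_ge0 ltW.
move=> i j; rewrite !mxE.
have cg : {within `[a, b], continuous (fun s => f s i j)}.
  move=> x; exact: (@continuous_comp (subspace `[a, b]) _ _ f (fun M : 'M[R]_(m, n) => M i j) x (cf x) (@coord_continuous R m n i j (f x))).
have dg : forall x, x \in `]a, b[%R -> is_derive x 1 (fun s => f s i j) (df x i j).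
  move=> x xab; have [d1 d2] := hd x xab.
  apply: DeriveDef; first by move/derivable_mxP: d1; apply.
  by rewrite (derive_mx d1) in d2; rewrite -d2 mxE.
have [c cab ->] := MVT altb dg cg.

rewrite [X in X - _]mulrC -mulrBr.
rewrite normrM [`|b - a|]ger0_norm; last by rewrite subr_ge0 ltW.
rewrite mulrC; apply: ler_wpM2r; first by rewrite subr_ge0 ltW.
have := le_trans (@mx_entry_le m n (df c - C) i j) (hB _ cab).
by rewrite !mxE.
Qed.

End SA.


Section SB.
Variable R : realType.

Lemma rowmul_bound (u : 'rV[R]_3) (J : 'M[R]_3) K :
  `|J| <= K -> `|u *m J| <= 3%:R * K * `|u|.
Proof.
move=> hJ.
have K0 : 0 <= K by apply: le_trans hJ.
apply: mx_norm_le; first by rewrite !mulr_ge0.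
move=> i j; rewrite (ord1 i) !mxE !big_ord_recr big_ord0 /= add0r.
have hb : forall k, `|u 0 k * J k j| <= K * `|u|.
  move=> k; rewrite normrM mulrC; apply: ler_pM => //.
    exact: le_trans (@mx_entry_le R _ _ J k j) hJ.
  exact: mx_entry_le.
apply: le_trans (ler_normD _ _) _.
have := hb (widen_ord (leqnSn 2) (widen_ord (leqnSn 1) ord_max)).
have := hb (widen_ord (leqnSn 2) ord_max).
have := hb ord_max.
have := ler_normD (u 0 (widen_ord (leqnSn 2) (widen_ord (leqnSn 1) ord_max)) *
   J (widen_ord (leqnSn 2) (widen_ord (leqnSn 1) ord_max)) j) 
  (u 0 (widen_ord (leqnSn 2) ord_max) * J (widen_ord (leqnSn 2) ord_max) j).
lra.
Qed.

Lemma lip_of_jac (g : 'rV[R]_3 -> 'rV[R]_3) K :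
  (forall p, differentiable g p) -> (forall p, `|jacobian g p| <= K) ->
  forall y z, `|g y - g z| <= 3%:R * K * `|y - z|.
Proof.
move=> dg hK y z.
pose p s : 'rV[R]_3 := z + s *: (y - z).
pose h s := g (p s).
have E : forall s, (fun k : R => k^-1 *: (h (k *: 1 + s) - h s)) =
    (fun k : R => k^-1 *: (g (k *: (y - z) + p s) - g (p s))).
  move=> s; apply/funext => k; rewrite /h /p.
  congr (_ *: (g _ - _)); have -> : k%:A = k by rewrite -[RHS]mulr1. 
  by rewrite scalerDl addrCA.
have hd : forall s : R, is_derive s (1 : R) h ('D_(y - z) g (p s)).
  move=> s; apply: DeriveDef.
    rewrite /derivable E; exact: diff_derivable.
  by rewrite /derive E.
have := @mvi R 1 3 h (fun s => 'D_(y - z) g (p s)) 0 0 1 (3%:R * K * `|y - z|) ler01.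
rewrite scaler0 !subr0 mulr1 /h /p scale1r scale0r addr0 [z + (y - z)]addrC subrK; apply.
- apply: continuous_subspaceT => s.
  apply: differentiable_continuous; apply/derivable1_diffP.
  by have [] := hd s.
- move=> s _; rewrite subr0 deriveEjacobian; [exact: rowmul_bound (hK _) | exact: dg].
Qed.

End SB.


Section SK.
Variable R : realType.

Lemma sub_cc {a b c d : R} : c <= a -> b <= d -> `[a, b] `<=` `[c, d].
Proof. by move=> ca bd; apply: subset_itv; rewrite bnd_simp. Qed.

Lemma cwB (A : set R) (f g : R -> 'rV[R]_3) :
  {within A, continuous f} -> {within A, continuous g} ->
  {within A, continuous (fun r => f r - g r)}.
Proof. by move=> cf cg r; exact: (continuousB (cf r) (cg r)). Qed.

Lemma cw_norm (A : set R) (f : R -> 'rV[R]_3) :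
  {within A, continuous f} -> {within A, continuous (fun r => `|f r|)}.
Proof.
move=> cf r.
exact: (@continuous_comp (subspace A) _ _ f (Num.norm : 'rV[R]_3 -> R) r (cf r) (@norm_continuous _ _ (f r))).
Qed.

Lemma key (eps T Lg : R) (X V : R -> R -> 'rV[R]_3 -> 'rV[R]_3 -> 'rV[R]_3)
  (G : R -> 'rV[R]_3 -> 'rV[R]_3) tau t x v w :
  0 < eps -> 0 <= Lg -> 0 <= tau -> tau <= t -> t <= T ->
  Lg * (t - tau) ^+ 2 / eps <= 1 / 2 ->
  (forall r, 0 <= r -> r <= T -> forall y z, `|G r y - G r z| <= Lg * `|y - z|) ->
  (forall t x v, 0 <= t -> t <= T ->
       [/\ X t t x v = x, V t t x v = v,
           {within `[0, T], continuous (fun tau => X tau t x v)},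
           {within `[0, T], continuous (fun tau => V tau t x v)} &
           forall tau, 0 < tau -> tau < T ->
             is_derive tau 1 (fun s => X s t x v) (eps^-1 *: V tau t x v) /\
             is_derive tau 1 (fun s => V s t x v) (- G tau (X tau t x v))]) ->
  `|X tau t x v - X tau t x w + ((t - tau) / eps) *: (v - w)| <=
    2 * (Lg * (t - tau) ^+ 2 / eps) * ((t - tau) / eps) * `|v - w|.
Proof.
move=> e0 L0 tau0 taut tT hsmall GL H.
have t0 : 0 <= t by apply: le_trans taut.
have [Xv Vv cXv cVv dv] := H t x v t0 tT.
have [Xw Vw cXw cVw dw] := H t x w t0 tT.
pose DX r := X r t x v - X r t x w.
pose DV r := V r t x v - V r t x w.
have cDX : {within `[0, T], continuous DX} by exact: cwB.
have cDV : {within `[0, T], continuous DV} by exact: cwB.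
set d := t - tau.
have d0 : 0 <= d by rewrite subr_ge0.
have cN : {within `[tau, t], continuous (fun r => `|DX r|)}.
  have h1 := sub_cc tau0 tT. have h2 := continuous_subspaceW h1 cDX. exact: cw_norm h2.
have [c cI cmax] := EVT_max taut cN.
set M := `|DX c|.
have M0 : 0 <= M by rewrite /M normr_ge0.
have inI : forall s r, tau <= s -> r \in `]s, t[%R -> 0 < r /\ r < T /\ tau <= r <= t.
  move=> s r ts; rewrite in_itv /= => /andP[h1 h2].
  split; first lra. split; first lra. apply/andP; split; lra.
have st2 : forall s, tau <= s -> s <= t -> `|DV s - (v - w)| <= Lg * M * d.
  move=> s ts st.
  have := @mvi R 1 3 DV (fun r => - G r (X r t x v) - - G r (X r t x w)) 0 s t (Lg * M) st.
  rewrite scaler0 subr0 /DV Vv Vw distrC => h.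
  apply: le_trans (h _ _ _) _.
  - exact: (continuous_subspaceW (sub_cc (le_trans tau0 ts) tT) cDV).
  - move=> r /(inI _ _ ts) [r0 [rT _]].
    have [_ h1] := dv r r0 rT; have [_ h2] := dw r r0 rT.
    exact: is_deriveB.
  - move=> r /(inI _ _ ts) [r0 [rT rI]].
    rewrite subr0 opprK addrC distrC.
    apply: le_trans (GL r (ltW r0) (ltW rT) _ _) _.
    apply: ler_wpM2l => //; apply: cmax; by rewrite in_itv.
  - apply: ler_wpM2l; first exact: mulr_ge0.
    rewrite /d; lra.
have st3 : forall s, tau <= s -> s <= t ->
    `|DX s + ((t - s) / eps) *: (v - w)| <= eps^-1 * (Lg * M * d) * (t - s).
  move=> s ts st.
  have := @mvi R 1 3 DX (fun r => eps^-1 *: V r t x v - eps^-1 *: V r t x w)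
     (eps^-1 *: (v - w)) s t (eps^-1 * (Lg * M * d)) st.
  rewrite /DX Xv Xw subrr sub0r -opprD normrN scalerA => h.
  apply: h.
  - exact: (continuous_subspaceW (sub_cc (le_trans tau0 ts) tT) cDX).
  - move=> r /(inI _ _ ts) [r0 [rT _]].
    have [h1 _] := dv r r0 rT; have [h2 _] := dw r r0 rT.
    exact: is_deriveB.
  - move=> r /(inI _ _ ts) [r0 [rT /andP[rI1 rI2]]].
    rewrite -!scalerBr normrZ gtr0_norm ?invr_gt0 //.
    apply: ler_wpM2l; first by rewrite ltW ?invr_gt0.
    exact: st2.
have Mb : M <= 2 * (d / eps) * `|v - w|.
  have /andP[c1 c2] : tau <= c <= t by rewrite in_itv /= in cI.
  have h := st3 c c1 c2.
  have h2 : M <= `|DX c + ((t - c) / eps) *: (v - w)| + ((t - c) / eps) * `|v - w|.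
    rewrite /M -[X in `|X|](addrK (((t - c) / eps) *: (v - w))).
    apply: le_trans (ler_normB _ _) _.
    rewrite normrZ ger0_norm // divr_ge0 // ?subr_ge0 // ltW //.
  have h3 : (t - c) / eps <= d / eps.
    by apply: ler_wpM2r; [rewrite invr_ge0 ltW | rewrite /d; lra].
  have k0 : 0 <= eps^-1 * (Lg * M * d) by rewrite !mulr_ge0 // invr_ge0 ltW.
  have k1 : eps^-1 * (Lg * M * d) * (t - c) <= eps^-1 * (Lg * M * d) * d.
    by apply: ler_wpM2l => //; rewrite /d; lra.
  have k2 : eps^-1 * (Lg * M * d) * d = (Lg * d ^+ 2 / eps) * M.
    by rewrite expr2; ring.
  have k3 : (Lg * d ^+ 2 / eps) * M <= 1 / 2 * M by apply: ler_wpM2r.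
  have k4 : ((t - c) / eps) * `|v - w| <= d / eps * `|v - w|.
    by apply: ler_wpM2r.
  lra.
have q0 : 0 <= Lg * d ^+ 2 / eps by rewrite !mulr_ge0 // ?sqr_ge0 // invr_ge0 ltW.
have := st3 tau (lexx _) taut.
rewrite -/d /DX => h.
apply: le_trans h _.
have -> : eps^-1 * (Lg * M * d) * d = (Lg * d ^+ 2 / eps) * M by ring.
have -> : 2 * (Lg * d ^+ 2 / eps) * (d / eps) * `|v - w| =
  (Lg * d ^+ 2 / eps) * (2 * (d / eps) * `|v - w|) by ring.
apply: ler_wpM2l; [exact: q0 | exact: Mb].
Qed.
End SK.


Section SD.
Variable R : realType.

Lemma dbound (f : 'rV[R]_3 -> 'rV[R]_3) (a K : R) v e :
  differentiable f v ->
  (forall w, `|f w - f v + a *: (w - v)| <= K * `|w - v|) ->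
  `|'D_e f v + a *: e| <= K * `|e|.
Proof.
move=> df hL.
have cv : derivable f v e := diff_derivable df.
have A := closed_closed_ball_ (x := - (a *: e)) (e := K * `|e|).
suff : closed_ball_ Num.norm (- (a *: e)) (K * `|e|) ('D_e f v).
  by rewrite /closed_ball_ /= -opprD normrN addrC.
have cv' : (fun h : R => h^-1 *: (f (h *: e + v) - f v)) @ 0^' --> 'D_e f v := cv.
apply: (closed_cvg _ A _ _ cv').
rewrite /closed_ball_ /=.
near=> h.
have h0 : h != 0 by near: h; exact: nbhs_dnbhs_neq.
have -> : - (a *: e) - h^-1 *: (f (h *: e + v) - f v) =
    - (h^-1 *: (f (h *: e + v) - f v + a *: ((h *: e + v) - v))).
  by rewrite addrK [in RHS]scalerDr [in RHS]scalerA [in RHS]scalerA mulrCA mulVf // mulr1 opprD addrC.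
rewrite normrN normrZ normfV.
apply: le_trans (ler_wpM2l _ (hL _)) _; first by rewrite invr_ge0.
by rewrite addrK normrZ mulrCA mulKf ?normr_eq0.
Unshelve. all: by end_near.
Qed.

End SD.

Theorem lemma3p4 (R : realType) :
  exists delta0 : R, 0 < delta0 /\
  exists T0 : R, 0 < T0 /\
  forall (gamma eps T delta : R) (phi : R -> 'rV[R]_3 -> R)
    (X V : R -> R -> 'rV[R]_3 -> 'rV[R]_3 -> 'rV[R]_3),
    -3 < gamma -> gamma <= 1 ->
    0 < eps -> eps <= 1 ->
    0 < delta -> delta <= delta0 -> 0 <= T ->
    (* regularity of the potential: C^2 in x, gradient and Hessian
       jointly continuous in (t, x) *)
    (forall t x, differentiable (phi t) x) ->
    (forall t x, differentiable (grad_x phi t) x) ->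
    (forall tx : R * 'rV[R]_3,
       {for tx, continuous (fun p : R * 'rV[R]_3 => grad_x phi p.1 p.2)}) ->
    (forall tx : R * 'rV[R]_3,
       {for tx, continuous (fun p : R * 'rV[R]_3 => hess_x phi p.1 p.2)}) ->
    (* sup_{0<=t<=T} (1+t)^{5/4} ||nabla_x phi(t)||_{W^{1,oo}} <= delta *)
    (forall t, 0 <= t -> t <= T ->
       W1inf_grad_le phi t (delta / (1 + t) `^ (5%:R / 4%:R))) ->
    (* (X, V)(tau; t, x, v) are the characteristics on [0, T] *)
    (forall t x v, 0 <= t -> t <= T ->
       [/\ X t t x v = x, V t t x v = v,
           {within `[0, T], continuous (fun tau => X tau t x v)},
           {within `[0, T], continuous (fun tau => V tau t x v)} &
           forall tau, 0 < tau -> tau < T ->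
             is_derive tau 1 (fun s => X s t x v) (eps^-1 *: V tau t x v) /\
             is_derive tau 1 (fun s => V s t x v)
               (- grad_x phi tau (X tau t x v))]) ->
    (* the characteristics are differentiable in v *)
    (forall tau t x v, 0 <= tau -> tau <= t -> t <= T ->
       differentiable (X tau t x) v) ->
    forall tau t x v, 0 <= tau -> tau <= t -> t <= T ->
      t <= Num.sqrt eps * T0 ->
      (2 * eps ^+ 3)^-1 * `|t - tau| ^+ 3 <= `|\det (jacobian (X tau t x) v)|
      /\ `|\det (jacobian (X tau t x) v)| <= 2 / eps ^+ 3 * `|t - tau| ^+ 3.
Proof.
exists 1; split; first exact: ltr01.
exists (1/25); split; first lra.
move=> gamma eps T delta phi X V _ _ e0 e1 dl0 dl1 T0' dphi dgrad _ _ hW H dXv.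
move=> tau t x v tau0 taut tT tsq.
have t0 : 0 <= t by apply: le_trans taut.
have dn : `|t - tau| = t - tau by rewrite ger0_norm // subr_ge0.
rewrite dn.
set d := t - tau.
have [dz|dpos] : d = 0 \/ 0 < d.
  by move: taut; rewrite -subr_ge0 -/d le_eqVlt => /orP[/eqP<-|->]; [left|right].
  move/eqP: (dz); rewrite subr_eq0 => /eqP ett.
  have E : X tau t x = cst x.
    by apply/funext => w; rewrite -ett; have [-> _ _ _ _] := H t x w t0 tT.
  have J0 : \det (jacobian (X tau t x) v) = 0.
    rewrite E /jacobian diff_cst det3E !mxE /=; ring.
  rewrite J0 dz normr0 expr0n /= !mulr0; split; exact: lexx.
set a := d / eps.
have a0 : 0 < a by rewrite divr_gt0.
set Lg := 3%:R * delta.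
have Lg0 : 0 <= Lg by rewrite /Lg mulr_ge0 // ltW.
have hess_b : forall r, 0 <= r -> r <= T -> forall p,
    `|jacobian (grad_x phi r) p| <= delta.
  move=> r r0 rT p.
  have := hW r r0 rT p p; rewrite /hess_x => h.
  have P1 : 1 <= (1 + r) `^ (5%:R / 4%:R).
    rewrite -[X in X <= _](powRr0 (1 + r)); apply: ler_powR; first lra.
    by rewrite divr_ge0.
  have P0 : 0 < (1 + r) `^ (5%:R / 4%:R) by lra.
  have : delta / (1 + r) `^ (5%:R / 4%:R) <= delta.
    rewrite ler_pdivrMr //; nra.
  have := normr_ge0 (grad_x phi r p). lra.
have GL : forall r, 0 <= r -> r <= T -> forall y z,
    `|grad_x phi r y - grad_x phi r z| <= Lg * `|y - z|.
  move=> r r0 rT y z.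
  exact: (@lip_of_jac R (grad_x phi r) delta (dgrad r) (hess_b r r0 rT) y z).
have dsq : d ^+ 2 / eps <= 1 / 625.
  have hd : d <= Num.sqrt eps * (1/25) by rewrite /d; lra.
  have s0 : 0 <= Num.sqrt eps * (1/25) by rewrite mulr_ge0 // sqrtr_ge0.
  have : d ^+ 2 <= (Num.sqrt eps * (1/25)) ^+ 2.
    have d0 : 0 <= d by lra.
    nra.
  rewrite exprMn (sqr_sqrtr (ltW e0)) => h.
  rewrite ler_pdivrMr //; lra.
have q1 : Lg * d ^+ 2 / eps <= 1 / 2.
  rewrite -mulrA; rewrite /Lg; nra.
have q2 : 2 * (Lg * d ^+ 2 / eps) <= 1 / 100.
  rewrite -mulrA; rewrite /Lg; nra.
have q0 : 0 <= Lg * d ^+ 2 / eps by rewrite -mulrA mulr_ge0 // divr_ge0 // ?sqr_ge0 // ltW.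
have L : forall w, `|X tau t x w - X tau t x v + a *: (w - v)| <=
    (2 * (Lg * d ^+ 2 / eps) * a) * `|w - v|.
  move=> w.
  exact: (@key R eps T Lg X V (grad_x phi) tau t x w v e0 Lg0 tau0 taut tT q1 GL H).
have Dle : forall e, `|'D_e (X tau t x) v + a *: e| <=
    (2 * (Lg * d ^+ 2 / eps) * a) * `|e|.
  move=> e; apply: dbound; [exact: dXv | exact: L].
have hJ : forall i j, `|jacobian (X tau t x) v i j + a *+ (i == j)| <= a / 100.
  move=> i j.
  pose e : 'rV[R]_3 := delta_mx 0 i.
  have -> : jacobian (X tau t x) v i j + a *+ (i == j) =
      ('D_e (X tau t x) v + a *: e) 0 j.
    rewrite /jacobian mxE deriveE; last exact: dXv.
    by rewrite !mxE /= eq_sym mulr_natr.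
  apply: le_trans (@mx_entry_le R 1 3 _ 0 j) _.
  apply: le_trans (Dle e) _.
  have en : `|e| <= 1.
    apply: mx_norm_le => // k l; rewrite !mxE.
    by case: (_ && _); rewrite ?normr1 ?normr0.
  have K0 : 0 <= 2 * (Lg * d ^+ 2 / eps) * a by rewrite mulr_ge0 // ?(ltW a0) // mulr_ge0.
  have h1 := ler_wpM2r (ltW a0) q2.
  have h2 := ler_wpM2l K0 en.
  lra.
have := @detbound R a _ a0 hJ.
have -> : a ^+ 3 / 2 = (2 * eps ^+ 3)^-1 * d ^+ 3.
  by rewrite /a; field; rewrite gt_eqF.
have -> : 2 * a ^+ 3 = 2 / eps ^+ 3 * d ^+ 3.
  by rewrite /a; field; rewrite gt_eqF.
by move/andP.
Qed.
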